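(* Let $\mathcal{X},\mathcal{Y}$ be finite sets and $n\ge1$. Let $\tilde{\Phi}_n=(\tilde{\varphi}_0,\tilde{\varphi}_2,\tilde{\psi})$ be a WAK code of blocklength $n$ with message sets $\tilde{\mathcal{M}}_0,\tilde{\mathcal{M}}_2$, and let $P_{\bar X\bar Y}\in\mathcal{P}_n(\mathcal{X}\times\mathcal{Y})$ be a joint type with $\log|\mathcal{T}^n_{\bar X}|\ge\log|\tilde{\mathcal{M}}_0|$, where $\mathcal{T}^n_{\bar X}$ is the type class of the marginal type $P_{\bar X}$. Then there exists another WAK code $\hat{\Phi}_n=(\hat{\varphi}_0,\hat{\varphi}_2,\hat{\psi})$ with message sets $\hat{\mathcal{M}}_0,\hat{\mathcal{M}}_2$ such that \begin{align*} \log|\hat{\mathcal{M}}_0| &\le \log|\tilde{\mathcal{M}}_0|+\log n+\log\log|\mathcal{X}|+2,\\ \log|\hat{\mathcal{M}}_2| &= \log|\tilde{\mathcal{M}}_2|,\\ \mathrm{P}_{\mathtt{WAK}}(\hat{\Phi}_n\mid P_{\mathcal{T}^n_{\bar X\bar Y}}) &\le \mathrm{P}_{\mathtt{WAK}}(\tilde{\Phi}_n\mid P_{\mathcal{T}^n_{\bar X\bar Y}}), \end{align*} and for every $m\in\hat{\mathcal{M}}_0$, $$\log|\hat{\varphi}_0^{-1}(m)\cap\mathcal{T}^n_{\bar X}|\le\log\frac{|\mathcal{T}^n_{\bar X}|}{|\tilde{\mathcal{M}}_0|}.$$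
   Context: All logarithms are base 2. $\mathcal{P}_n(\mathcal{X}\times\mathcal{Y})$ is the set of joint types of sequences in $\mathcal{X}^n\times\mathcal{Y}^n$; for a joint type $P_{\bar X\bar Y}$, $\mathcal{T}^n_{\bar X\bar Y}$ is its type class and $P_{\mathcal{T}^n_{\bar X\bar Y}}$ is the uniform distribution on $\mathcal{T}^n_{\bar X\bar Y}$. A WAK code of blocklength $n$ is a triple $(\tilde{\varphi}_0,\tilde{\varphi}_2,\tilde{\psi})$ of maps $\tilde{\varphi}_0:\mathcal{X}^n\to\tilde{\mathcal{M}}_0$, $\tilde{\varphi}_2:\mathcal{Y}^n\to\tilde{\mathcal{M}}_2$, $\tilde{\psi}:\tilde{\mathcal{M}}_0\times\tilde{\mathcal{M}}_2\to\mathcal{Y}^n$, with finite sets $\tilde{\mathcal{M}}_0,\tilde{\mathcal{M}}_2$. For $(X^n,Y^n)\sim P$, $\mathrm{P}_{\mathtt{WAK}}(\tilde{\Phi}_n\mid P)$ is the probability that $\tilde{\psi}(\tilde{\varphi}_0(X^n),\tilde{\varphi}_2(Y^n))\ne Y^n$. *)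

(* Defs.v *)
From HB Require Import structures.
From mathcomp Require Import all_boot all_order all_algebra.
From mathcomp Require Import all_classical all_reals.
From mathcomp Require Import exp.
Set Implicit Arguments. Unset Strict Implicit. Unset Printing Implicit Defensive.
Import Order.TTheory GRing.Theory Num.Theory.
Local Open Scope ring_scope.

(* Base-2 logarithm (MathComp-Analysis convention: ln x = 0 for x <= 0). *)
Definition log2 {R : realType} (x : R) : R := ln x / ln 2.

Section Types.
Variables (X Y : finType) (n : nat).

Definition ptype (x : n.-tuple X) : {ffun X -> nat} :=
  [ffun a => count (pred1 a) x].

Definition jtype (x : n.-tuple X) (y : n.-tuple Y) : {ffun X * Y -> nat} :=
  [ffun ab => count (pred1 ab) (zip x y)].

(* P_n(X x Y): the set of joint types of sequences in X^n x Y^n,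
   each represented by its count function n * P(a,b) *)
Definition is_jointType (P : {ffun X * Y -> nat}) : Prop :=
  exists (x : n.-tuple X) (y : n.-tuple Y), jtype x y = P.

Definition typeClassXY (P : {ffun X * Y -> nat}) :
  {set n.-tuple X * n.-tuple Y} :=
  [set xy | jtype xy.1 xy.2 == P].

Definition margX (P : {ffun X * Y -> nat}) : {ffun X -> nat} :=
  [ffun a => \sum_(b : Y) P (a, b)]%N.

Definition typeClassX (P : {ffun X * Y -> nat}) : {set n.-tuple X} :=
  [set x | ptype x == margX P].

Definition unifT {R : realType} (P : {ffun X * Y -> nat})
  (xy : n.-tuple X * n.-tuple Y) : R :=
  if xy \in typeClassXY P then (#|typeClassXY P|%:R)^-1 else 0.

Definition Pwak {R : realType} (M0 M2 : finType)
  (phi0 : n.-tuple X -> M0) (phi2 : n.-tuple Y -> M2)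
  (psi : M0 -> M2 -> n.-tuple Y) (Q : n.-tuple X * n.-tuple Y -> R) : R :=
  \sum_(xy : n.-tuple X * n.-tuple Y | psi (phi0 xy.1) (phi2 xy.2) != xy.2) Q xy.

End Types.

(* Main.v *)
Require Import Defs.
From HB Require Import structures.
From mathcomp Require Import all_boot all_order all_algebra.
From mathcomp Require Import all_classical all_reals.
From mathcomp Require Import exp.
From mathcomp Require Import zify.
Import Order.TTheory GRing.Theory Num.Theory.
Local Open Scope ring_scope.

Section Comb.
Context {A M : finType}. Variables (T : {set A}) (f : A -> M) (K : nat).

Definition binS (m : M) := [set x in T | f x == m].
Definition jdx (x : A) := (index x (enum (binS (f x))) %/ K)%N.

Lemma jdx_le x : (jdx x <= #|binS (f x)| %/ K)%N.
Proof. by rewrite /jdx leq_div2r // cardE index_size. Qed.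

Lemma jdx_ltN x : (jdx x < #|A|.+1)%N.
Proof.
rewrite ltnS; apply: leq_trans (jdx_le x) _.
apply: leq_trans (leq_div _ _) _; exact: max_card.
Qed.

Lemma sumB : (\sum_m #|binS m|)%N = #|T|.
Proof.
rewrite -sum1_card (partition_big f xpredT) //=.
apply: eq_bigr => m _; rewrite -sum1_card; apply: eq_bigl => x.
by rewrite inE.
Qed.

Lemma sum_c : (0 < K)%N -> K = (#|T| %/ #|M|)%N -> (0 < #|M|)%N ->
  (\sum_m (#|binS m| %/ K) < 2 * #|M|)%N.
Proof.
move=> K0 eK M0.
have h1 : ((\sum_m (#|binS m| %/ K)) * K <= #|T|)%N.
  rewrite big_distrl /= -sumB; apply: leq_sum => m _; exact: leq_trunc_div.
have h2 := ltn_ceil #|T| M0. rewrite -eK in h2.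
set s := (\sum_m _)%N in h1 *.
nia.
Qed.

Lemma bin_small m i : (0 < K)%N ->
  (#|[set x in T | (f x == m) && (jdx x == i)]| <= K)%N.
Proof.
move=> K0.
set S := [set x in T | _].
pose g (x : A) : 'I_K := Ordinal (ltn_pmod (index x (enum (binS m))) K0).
have inj : {in S &, injective g}.
  move=> x y; rewrite !inE => /andP [xT /andP [/eqP fx /eqP jx]]
    /andP [yT /andP [/eqP fy /eqP jy]] /(congr1 val) /= eg.
  have ei : index x (enum (binS m)) = index y (enum (binS m)).
    rewrite (divn_eq (index x _) K) (divn_eq (index y _) K) eg.
    by move: jx jy; rewrite /jdx fx fy => -> ->.
  have xs : x \in enum (binS m) by rewrite mem_enum inE xT fx eqxx.
  have ys : y \in enum (binS m) by rewrite mem_enum inE yT fy eqxx.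
  by rewrite -(nth_index x xs) ei (nth_index x ys).
rewrite -(card_in_imset inj).
by apply: leq_trans (max_card _) _; rewrite card_ord.
Qed.

End Comb.

Lemma log2_0 (R : realType) : log2 (0 : R) = 0.
Proof. by rewrite /log2 ln0 // mul0r. Qed.

Lemma ln2_gt0 (R : realType) : 0 < ln (2 : R).
Proof. by apply: ln_gt0; rewrite ltr1n. Qed.

Lemma log2_ge0 (R : realType) (y : R) : 1 <= y -> 0 <= log2 y.
Proof.
move=> y1; rewrite /log2 divr_ge0 //; first exact: ln_ge0.
exact: ltW (ln2_gt0 R).
Qed.

Lemma log2_le (R : realType) (a : nat) (y : R) : a%:R <= y -> 1 <= y ->
  log2 (a%:R : R) <= log2 y.
Proof.
move=> ay y1; case: a ay => [|a] ay; first by rewrite log2_0 log2_ge0.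
rewrite /log2 ler_pM2r ?invr_gt0 ?ln2_gt0 // ler_ln // posrE.
  by rewrite ltr0n.
by apply: lt_le_trans y1.
Qed.

Lemma log2_nat_le (R : realType) (a b : nat) : (a <= b)%N ->
  log2 (a%:R : R) <= log2 (b%:R : R).
Proof.
case: b => [|b] ab; first by move: ab; rewrite leqn0 => /eqP ->.
by apply: log2_le; rewrite ?ler_nat // ler1n.
Qed.

Theorem lemma1 (R : realType) (X Y : finType) (n : nat)
  (hn : (1 <= n)%N) (hX : (1 < #|X|)%N)
  (M0 M2 : finType)
  (phi0 : n.-tuple X -> M0) (phi2 : n.-tuple Y -> M2)
  (psi : M0 -> M2 -> n.-tuple Y)
  (P : {ffun X * Y -> nat}) (hP : is_jointType n P)
  (hM0 : log2 (#|typeClassX n P|%:R : R) >= log2 (#|M0|%:R : R)) :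
  exists (M0' M2' : finType)
         (phi0' : n.-tuple X -> M0') (phi2' : n.-tuple Y -> M2')
         (psi' : M0' -> M2' -> n.-tuple Y),
    [/\ log2 (#|M0'|%:R : R)
          <= log2 (#|M0|%:R : R) + log2 (n%:R : R)
             + log2 (log2 (#|X|%:R : R)) + 2,
        log2 (#|M2'|%:R : R) = log2 (#|M2|%:R : R),
        Pwak phi0' phi2' psi' (unifT (R:=R) P)
          <= Pwak phi0 phi2 psi (unifT (R:=R) P)
      & forall m : M0',
          log2 (#|[set x in typeClassX n P | phi0' x == m]|%:R : R)
            <= log2 ((#|typeClassX n P|%:R : R) / (#|M0|%:R : R))].
Proof.
set TX := typeClassX n P.
have ln_n : 0 <= log2 (n%:R : R) by apply: log2_ge0; rewrite ler1n.
have lX1 : 1 <= log2 (#|X|%:R : R).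
  rewrite /log2 ler_pdivlMr ?ln2_gt0 // mul1r ler_ln ?posrE ?ltr0n //.
    by rewrite ler_nat.
  by apply: leq_trans hX.
have lnX : 0 <= log2 (log2 (#|X|%:R : R)) by apply: log2_ge0.
have [T0|Tpos] := posnP #|TX|.
  exists M0, M2, phi0, phi2, psi; split => //.
  - have := @log2_nat_le R 0 #|M0| (leq0n _); rewrite log2_0 => h.
    by rewrite -!addrA lerDl; do 2 rewrite addr_ge0 //.
  - move=> m.
    have -> : #|[set x in TX | phi0 x == m]| = 0%N.
      have sub : [set x in TX | phi0 x == m] \subset TX.
        by apply/fintype.subsetP => x; rewrite inE => /andP [].
      by apply/eqP; rewrite -leqn0 -T0; apply: subset_leq_card.
    by rewrite T0 mul0r.
have [x0 x0T] : exists x, x \in TX by apply/card_gt0P.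
have Mpos : (0 < #|M0|)%N by apply/card_gt0P; exists (phi0 x0).
have MT : (#|M0| <= #|TX|)%N.
  move: hM0; rewrite /log2 ler_pM2r ?invr_gt0 ?ln2_gt0 // ler_ln ?posrE ?ltr0n //.
  by rewrite ler_nat.
set K := (#|TX| %/ #|M0|)%N.
have K0 : (0 < K)%N by rewrite divn_gt0.
set c := fun m => (#|binS TX phi0 m| %/ K)%N.
set N := (#|{: n.-tuple X}|.+1)%N.
pose M0' : finType := {p : M0 * 'I_N | (p.2 <= c p.1)%N}.
have memS : forall x, ((inord (jdx TX phi0 K x) : 'I_N) <= c (phi0 x))%N.
  by move=> x; rewrite inordK ?jdx_ltN //; apply: jdx_le.
pose phi0' (x : n.-tuple X) : M0' :=
  @exist _ (fun p : M0 * 'I_N => is_true (p.2 <= c p.1)%N)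
    (phi0 x, inord (jdx TX phi0 K x)) (memS x).
pose psi' (p : M0') (m2 : M2) := psi (val p).1 m2.
exists M0', M2, phi0', phi2, psi'; split => //.
- have cardM : (#|M0'| <= 4 * #|M0|)%N.
    rewrite card_sig -sum1_card.
    rewrite -(pair_big_dep xpredT (fun m (i : 'I_N) => (i <= c m)%N)
                (fun _ _ => 1%N)) /=.
    apply: (@leq_trans (\sum_m (c m).+1)%N).
      apply: leq_sum => m _.
      rewrite sum1_card.
      apply: (@leq_trans (size [seq (inord k : 'I_N) | k <- iota 0 (c m).+1])).
        apply: leq_trans (card_size _).
        apply: subset_leq_card; apply/fintype.subsetP => i; move=> ic.
        have ic' : (i <= c m)%N by exact: ic.
        rewrite -[i]inord_val; apply: map_f; rewrite mem_iota add0n ltnS.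
        exact: ic'.
      by rewrite size_map size_iota.
    have := sum_c TX phi0 K K0 (erefl K) Mpos.
    have e : (\sum_m (c m).+1 = \sum_m c m + #|M0|)%N.
      rewrite (eq_bigr (fun m => c m + 1)%N); last by move=> m _; rewrite addn1.
      by rewrite big_split /= sum_nat_const muln1.
    rewrite e => h.
    have h' : (\sum_m c m < 2 * #|M0|)%N by exact: h.
    apply: leq_trans (leq_add (ltnW h') (leqnn #|M0|)) _.
    by rewrite -mulSnr leq_mul2r; apply/orP; right.
  apply: (@le_trans _ _ (log2 ((4 * #|M0|)%:R : R))); first exact: log2_nat_le.
  have -> : log2 ((4 * #|M0|)%:R : R) = log2 (#|M0|%:R : R) + 2.
    rewrite /log2 natrM lnM ?posrE ?ltr0n // mulrDl.
    have -> : (4%:R : R) = 2 * 2 by rewrite -natrM.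
    rewrite lnM ?posrE ?ltr0n // mulrDl divff ?gt_eqF ?ln2_gt0 //.
    by rewrite addrC.
  by rewrite lerD2r -addrA lerDl addr_ge0.
- move=> [[m i] Hmi].
  apply: log2_le.
    apply: (@le_trans _ _ (K%:R)).
      rewrite ler_nat; apply: leq_trans (bin_small TX phi0 K m (val i) K0).
      apply: subset_leq_card; apply/fintype.subsetP => x; rewrite !inE.
      case/andP => -> /eqP [] -> ei /=.
      by rewrite eqxx /= -ei inordK ?jdx_ltN.
    rewrite ler_pdivlMr ?ltr0n // -natrM ler_nat.
    exact: leq_trunc_div.
  by rewrite ler_pdivlMr ?ltr0n // mul1r ler_nat.
Qed.
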